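(* If $T\in\mathcal{T}_3$ has $n\ge 30$ vertices then there is some internal vertex $v$ of $T$ with $|\mu(T)-\lambda(T,v)|<2$.
   Context: A leaf is a vertex of degree at most 1; an internal vertex has degree at least 2. $\mathcal{T}_3$ is the set of finite trees with at least one internal vertex in which every internal vertex has degree at least 3. A subtree is a nonempty vertex set inducing a connected subgraph. $\mu(T)$ is the average number of vertices over all subtrees of $T$, and $\lambda(T,v)$ is the average number of vertices over all subtrees of $T$ containing $v$. *)

(* Defs.v *)
From mathcomp Require Import all_boot all_order all_algebra.
Set Implicit Arguments. Unset Strict Implicit. Unset Printing Implicit Defensive.
Import Order.TTheory GRing.Theory Num.Theory.

Definition simple_graph (V : finType) (e : rel V) : Prop :=
  symmetric e /\ irreflexive e.

Definition induced (V : finType) (e : rel V) (S : {set V}) : rel V :=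
  fun x y => [&& x \in S, y \in S & e x y].

Definition connected_in (V : finType) (e : rel V) (S : {set V}) : bool :=
  [forall x in S, forall y in S, connect (induced e S) x y].

Definition edges (V : finType) (e : rel V) : {set {set V}} :=
  [set E : {set V} | [exists x, exists y, e x y && (E == [set x; y])]].

Definition is_tree (V : finType) (e : rel V) : Prop :=
  [/\ simple_graph e, 0 < #|V|, connected_in e [set: V]
    & #|edges e| = #|V| - 1]%N.

Definition deg (V : finType) (e : rel V) (x : V) : nat := #|[set y | e x y]|.

Definition internal (V : finType) (e : rel V) (x : V) : bool := (2 <= deg e x)%N.

Definition in_T3 (V : finType) (e : rel V) : Prop :=
  [/\ is_tree e, exists x, internal e x
    & forall x, internal e x -> (3 <= deg e x)%N].

Definition subtrees (V : finType) (e : rel V) : {set {set V}} :=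
  [set S : {set V} | (S != set0) && connected_in e S].

Local Open Scope ring_scope.

Definition mu (V : finType) (e : rel V) : rat :=
  (\sum_(S in subtrees e) #|S|)%:R / #|subtrees e|%:R.

Definition lambda (V : finType) (e : rel V) (v : V) : rat :=
  (\sum_(S in subtrees e | v \in S) #|S|)%:R /
  #|[set S in subtrees e | v \in S]|%:R.

(* Main.v *)
Require Import Defs.
From mathcomp Require Import all_boot all_order all_algebra.
From mathcomp Require Import zify ring lra.
Set Implicit Arguments. Unset Strict Implicit. Unset Printing Implicit Defensive.
Import Order.TTheory GRing.Theory Num.Theory.

Lemma pow_poly k : 8 <= k -> (4 * k-4) * (20 * k-16) < 16 * 2^k.
Proof.
elim: k => [//|k IH] Hk.
case: (eqVneq k 7) => [->//|Hk7].
have Hk8 : 8 <= k by lia.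
have := IH Hk8; rewrite expnS.
have -> : (4 * k.+1 - 4) * (20 * k.+1 - 16) = (4 * k) * (20 * k+4) by lia.
move=> H; apply: leq_ltn_trans _ (_ : 2 * ((4 * k - 4) * (20 * k - 16)) < _); last by lia.
nia.
Qed.

Lemma num_ineq l i M : 16 <= l -> i < l -> 3 <= M -> M.*2 <= l ->
  (l + i - 3) * (2 * l + (i-1) * 2^M) < 2 * 2^l.
Proof.
move=> Hl Hi HM H2M.
have -> : 2^l = 2^M * 2^(l-M) by rewrite -expnD; congr (_ ^ _); lia.
set k := l - M.
have Hk : 8 <= k by rewrite /k; lia.
have Hlk : l <= 2 * k by rewrite /k; lia.
set a := 2^M; set b := 2^k.
have Ha : 8 <= a by rewrite /a (_ : 8 = 2^3) // leq_pexp2l.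
have Hb := @pow_poly k Hk; rewrite -/b in Hb.
have E1 : (l + i - 3) * (2 * l + (i-1) * a) <= (2 * l-4) * (2 * l + (l-2) * a).
  apply: leq_mul; first lia.
  by rewrite leq_add2l leq_mul2r; apply/orP; right; lia.
have E2 : 8 * (2 * l + (l-2) * a) <= a * (10 * l-16).
  have -> : 8 * (2 * l + (l-2) * a) = 16 * l + (8 * l-16) * a by rewrite mulnDr mulnA mulnBl; lia.
  have -> : a * (10 * l - 16) = 2 * l * a + (8 * l-16) * a by rewrite mulnC -mulnDl; congr (_ * _); lia.
  rewrite leq_add2r; nia.
have E3 : (2 * l-4) * (10 * l-16) <= (4 * k-4) * (20 * k-16) by apply: leq_mul; lia.
rewrite -(ltn_pmul2l (isT : 0 < 8)).
apply: leq_ltn_trans (_ : 8 * ((2 * l-4) * (2 * l + (l-2) * a)) < _).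
  by rewrite leq_mul2l E1 orbT.
rewrite mulnCA; apply: leq_ltn_trans (_ : (2 * l-4) * (a * (10 * l-16)) < _).
  by rewrite leq_mul2l E2 orbT.
rewrite mulnCA; apply: leq_ltn_trans (_ : a * ((4 * k-4) * (20 * k-16)) < _).
  by rewrite leq_mul2l E3 orbT.
have Ha0 : 0 < a by lia.
rewrite -(ltn_pmul2l Ha0) in Hb.
move: Hb; rewrite !mulnA; lia.
Qed.

Section Rooted.
Variables (V : finType) (e : rel V).
Hypothesis esymm : symmetric e.
Hypothesis eirr : irreflexive e.
Hypothesis econn : forall x y, connect e x y.
Hypothesis ecard : #|edges e| = #|V| - 1.
Variable r : V.

Fixpoint ball k : {set V} :=
  if k is k'.+1 then ball k' :|: [set y | [exists x in ball k', e x y]]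
  else [set r].

Lemma ballS k : ball k \subset ball k.+1.
Proof. by rewrite /= subsetUl. Qed.

Lemma ball_mono k m : k <= m -> ball k \subset ball m.
Proof.
elim: m => [|m IH]; first by rewrite leqn0 => /eqP ->.
rewrite leq_eqVlt => /orP [/eqP -> //| ]; rewrite ltnS => /IH H.
exact: subset_trans H (ballS m).
Qed.

Lemma in_ball_path p : forall s k, s \in ball k -> path e s p ->
  last s p \in ball (k + size p).
Proof.
elim: p => [|a p IH] s k Hs /=; first by rewrite addn0.
case/andP=> Hsa Hp; rewrite addnS -addSn; apply: IH Hp.
rewrite /= inE; apply/orP; right; rewrite inE; apply/existsP; exists s.
by rewrite Hs.
Qed.

Lemma in_ball_some x : exists k, x \in ball k.
Proof.
have /connectP [p Hp ->] := econn r x.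
exists (0 + size p); apply: in_ball_path Hp; by rewrite /= inE.
Qed.

Definition d x := ex_minn (in_ball_some x).

Lemma dP x : x \in ball (d x).
Proof. by rewrite /d; case: ex_minnP. Qed.

Lemma dmin x k : x \in ball k -> d x <= k.
Proof. by rewrite /d; case: ex_minnP => m _ H /H. Qed.

Lemma d_r : d r = 0.
Proof. by apply/eqP; rewrite -leqn0; apply: dmin; rewrite inE. Qed.

Lemma d0 x : d x = 0 -> x = r.
Proof. by move=> H; have := dP x; rewrite H inE => /eqP. Qed.

Lemma d_edge x y : e x y -> d y <= (d x).+1.
Proof.
move=> Hxy; apply: dmin; rewrite /= inE; apply/orP; right.
by rewrite inE; apply/existsP; exists x; rewrite dP.
Qed.

Lemma d_down x : x != r -> exists y, e y x && ((d y).+1 == d x).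
Proof.
move=> Hx; case Hd: (d x) => [|k]; first by rewrite (d0 Hd) eqxx in Hx.
have := dP x; rewrite Hd /= inE => /orP [Hb|].
  by have := dmin Hb; rewrite Hd ltnn.
rewrite inE => /existsP [y /andP [Hy Hyx]]; exists y; rewrite Hyx /=.
have H1 := dmin Hy; have H2 := d_edge Hyx; rewrite Hd in H2.
by apply/eqP; lia.
Qed.

Definition par x :=
  if x == r then r else odflt r [pick y | e y x && ((d y).+1 == d x)].

Lemma par_r : par r = r.
Proof. by rewrite /par eqxx. Qed.

Lemma parP x : x != r -> e (par x) x /\ (d (par x)).+1 = d x.
Proof.
move=> Hx; rewrite /par (negbTE Hx); case: pickP => [y /andP [H1 /eqP H2] //|H].
by have [y] := d_down Hx; rewrite H.
Qed.

Lemma par_e x : x != r -> e x (par x).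
Proof. by move=> /parP [H _]; rewrite esymm. Qed.

Lemma d_par x : x != r -> d (par x) < d x.
Proof. by move=> /parP [_ <-]. Qed.

Lemma edgeP x y : e x y ->
  ((y != r) && (x == par y)) || ((x != r) && (y == par x)).
Proof.
move=> Hxy.
pose f z := [set z; par z].
have finj : {in [set~ r] &, injective f}.
  move=> a b; rewrite !inE => Ha Hb /setP Hab.
  move: (Hab b); rewrite !inE !eqxx /= ?orbT.
  case/orP=> [/eqP -> //|/eqP Hb1].
  move: (Hab a); rewrite !inE !eqxx /= ?orbT => /esym.
  case/orP=> [/eqP -> //|/eqP Ha1].
  have [_ Ea] := parP Ha; have [_ Eb] := parP Hb.
  by rewrite -Hb1 in Ea; rewrite -Ha1 in Eb; lia.
have Hsub : f @: [set~ r] \subset edges e.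
  apply/subsetP=> E /imsetP [z Hz ->]; rewrite inE; apply/existsP; exists (par z).
  apply/existsP; exists z; rewrite !inE in Hz; have [-> _] := parP Hz.
  by rewrite /= /f setUC.
have Heq : f @: [set~ r] = edges e.
  apply/eqP; rewrite eqEcard Hsub card_in_imset // cardsC1 ecard.
  by rewrite /= subn1 leqnn.
have : [set x; y] \in edges e.
  by rewrite inE; apply/existsP; exists x; apply/existsP; exists y; rewrite Hxy eqxx.
rewrite -Heq => /imsetP [z Hz /setP Hs]; rewrite !inE in Hz.
have := Hs x; have := Hs y; rewrite !inE !eqxx /= orbT.
have Hne : x != y by apply/eqP=> E; rewrite E eirr in Hxy.
move=> /esym /orP [] /eqP Ey /esym /orP [] /eqP Ex.
- by rewrite Ex Ey eqxx in Hne.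
- by rewrite Ey Ex Hz eqxx.
- by rewrite Ex Ey Hz eqxx orbT.
- by rewrite Ex Ey eqxx in Hne.
Qed.


Lemma d_iter k y : d (iter k par y) = d y - k.
Proof.
elim: k => [|k IH]; first by rewrite subn0.
rewrite iterS; case: (eqVneq (iter k par y) r) => [E|Hn].
  by rewrite E par_r d_r; rewrite E d_r in IH; lia.
by have [_ E] := parP Hn; rewrite IH in E; lia.
Qed.

Definition anc x y := fconnect par y x.

Lemma ancP x y : reflect (exists k, iter k par y = x) (anc x y).
Proof.
apply: (iffP idP) => [H|[k <-]]; last exact: fconnect_iter.
by exists (findex par y x); apply: iter_findex.
Qed.

Lemma anc_refl x : anc x x.
Proof. exact: connect0. Qed.

Lemma anc_par y : anc (par y) y.
Proof. exact: fconnect1. Qed.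

Lemma anc_trans x y z : anc x y -> anc y z -> anc x z.
Proof. by move=> H1 H2; apply: connect_trans H2 H1. Qed.

Lemma anc_d x y : anc x y -> d x <= d y.
Proof. by case/ancP=> k <-; rewrite d_iter leq_subr. Qed.

Lemma anc_deq x y : anc x y -> d x = d y -> x = y.
Proof.
case/ancP=> k <-; rewrite d_iter => E.
case: k E => [//|k] E.
have Hy : d y = 0 by lia.
by rewrite (d0 Hy) iter_fix // par_r.
Qed.

Lemma anc_antisym x y : anc x y -> anc y x -> x = y.
Proof.
move=> H1 H2; apply: (anc_deq H1); apply/eqP.
by rewrite eqn_leq (anc_d H1) (anc_d H2).
Qed.

Lemma anc_r y : anc r y.
Proof.
apply/ancP; exists (d y); apply: d0; by rewrite d_iter subnn.
Qed.

Lemma anc_to_r x : anc x r -> x = r.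
Proof. by move=> H; apply: anc_antisym H (anc_r x). Qed.

Lemma anc_step x y : anc x y -> x != y -> anc x (par y).
Proof.
case/ancP=> [[|k] <-]; first by rewrite eqxx.
by move=> _; apply/ancP; exists k; rewrite iterSr.
Qed.

Lemma anc_total x y z : anc x z -> anc y z -> anc x y || anc y x.
Proof.
case/ancP=> a <-; case/ancP=> b <-.
case: (leqP a b) => H.
  apply/orP; right; apply/ancP; exists (b - a); by rewrite -iterD subnK.
apply/orP; left; apply/ancP; exists (a - b); rewrite -iterD subnK //; lia.
Qed.

Lemma anc_child x y : anc x y -> y != x ->
  exists c, [/\ c != r, par c = x & anc c y].
Proof.
case/ancP=> k; elim: k => [|k IH] /=; first by move=> ->; rewrite eqxx.
move=> Hk Hyx.
case: (eqVneq (iter k par y) r) => [E|Hn].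
  apply: IH => //; by rewrite -Hk E par_r.
exists (iter k par y); split => //; exact: fconnect_iter.
Qed.

Lemma anc_par_ne x : x != r -> par x != x.
Proof. by move=> /d_par H; apply/eqP=> E; rewrite E ltnn in H. Qed.

Definition desc x := [set y | anc x y].

Lemma desc_r : desc r = setT.
Proof. by apply/setP=> y; rewrite !inE anc_r. Qed.

Lemma conn_closed (R : rel V) (B : {set V}) :
  (forall a b, R a b -> a \in B -> b \in B) ->
  forall x y, connect R x y -> x \in B -> y \in B.
Proof.
move=> HB x y /connectP [p Hp ->]; elim: p x Hp => [//|a p IH] x /= /andP [Hxa Hp] Hx.
exact: IH Hp (HB _ _ Hxa Hx).
Qed.

Lemma induced_sym A : symmetric (induced e A).
Proof. by move=> x y; rewrite /induced esymm andbCA. Qed.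

Lemma keyA (S : {set V}) y t : connected_in e S -> y \in S -> t \in S -> ~~ anc y t ->
  (y != r) && (par y \in S).
Proof.
move=> HS Hy Ht Hyt; apply/negPn/negP=> Hbad; move/negP: Hyt; apply.
have Hc : connect (induced e S) y t.
  by move/forallP/(_ y)/implyP/(_ Hy)/forallP/(_ t)/implyP/(_ Ht): HS.
have := @conn_closed (induced e S) (desc y) _ y t Hc.
rewrite !inE anc_refl; apply=> //.
move=> a b /and3P [Ha Hb Hab]; rewrite !inE => Hya.
case/orP: (edgeP Hab) => /andP [Hne /eqP E].
  by rewrite E in Hya; apply: anc_trans Hya (anc_par b).
rewrite E; case: (eqVneq a y) => [Eay|Hay]; last by apply: anc_step Hya _; rewrite eq_sym.
by subst a; rewrite Hne -E Hb in Hbad.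
Qed.

Lemma closed_conn (S : {set V}) t : t \in S ->
  (forall y, y \in S -> y != t -> (y != r) && (par y \in S)) ->
  connected_in e S.
Proof.
move=> Ht HS.
have Hto : forall k y, d y <= k -> y \in S -> connect (induced e S) y t.
  elim=> [|k IH] y Hk Hy; case: (eqVneq y t) => [->|Hyt]; rewrite ?connect0 //.
    have Ey : y = r by apply: d0; lia.
    by have := HS y Hy Hyt; rewrite Ey eqxx.
  case/andP: (HS y Hy Hyt) => Hr Hp.
  apply: connect_trans (IH _ _ Hp); last by have := d_par Hr; lia.
  by apply: connect1; rewrite /induced Hy Hp par_e.
apply/forallP=> x; apply/implyP=> Hx; apply/forallP=> z; apply/implyP=> Hz.
apply: connect_trans (Hto _ _ (leqnn _) Hx) _.
by rewrite (sym_connect_sym (@induced_sym S)) (Hto _ _ (leqnn _) Hz).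
Qed.

Lemma conn_chain (A : {set V}) c y : anc c y ->
  (forall z, anc c z -> anc z y -> z \in A) -> connect (induced e A) c y.
Proof.
move: {2}(d y) (leqnn (d y)) => k; elim: k y => [|k IH] y Hk Hcy HA.
  have Ey : y = r by apply: d0; lia.
  by subst y; rewrite (anc_to_r Hcy) connect0.
case: (eqVneq y c) => [->|Hyc]; first exact: connect0.
have Hyr : y != r by apply/eqP=> E; subst y; rewrite (anc_to_r Hcy) eqxx in Hyc.
have Hcp : anc c (par y) by apply: anc_step Hcy _; rewrite eq_sym.
apply: connect_trans (IH (par y) _ Hcp _) _.
- by have := d_par Hyr; lia.
- by move=> z H1 H2; apply: HA H1 (anc_trans H2 (anc_par y)).
apply: connect1; rewrite /induced (HA _ Hcp (anc_par y)) (HA _ Hcy (anc_refl y)).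
by have [-> _] := parP Hyr.
Qed.

Definition Lf := [set z | ~~ internal e z].
Definition Ch x := [set y | (y != r) && (par y == x)].
Definition Tset x := [set S in subtrees e | (x \in S) && (S \subset desc x)].

Lemma ch_e x y : y \in Ch x -> e x y.
Proof. by rewrite inE => /andP [Hy /eqP <-]; have [] := parP Hy. Qed.

Lemma ch_anc x y : y \in Ch x -> anc x y.
Proof. by rewrite inE => /andP [_ /eqP <-]; apply: anc_par. Qed.

Lemma ch_d x y : y \in Ch x -> d y = (d x).+1.
Proof. by rewrite inE => /andP [Hy /eqP <-]; have [_ ->] := parP Hy. Qed.

Lemma nbr_sub x : [set y | e x y] \subset Ch x :|: [set par x].
Proof.
apply/subsetP=> y; rewrite inE => Hxy; rewrite !inE.
by case/orP: (edgeP Hxy) => /andP [H1 /eqP H2]; rewrite ?H1 ?H2 eqxx ?orbT.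
Qed.

Lemma deg_le x : deg e x <= #|Ch x| + 1.
Proof.
apply: leq_trans (subset_leq_card (nbr_sub x)) _.
by rewrite cardsU cards1; lia.
Qed.

Lemma deg_root : deg e r <= #|Ch r|.
Proof.
apply: subset_leq_card; apply/subsetP=> y; rewrite !inE => Hry.
case/orP: (edgeP Hry) => /andP [H1 /eqP H2]; first by rewrite H1 -H2 eqxx.
by rewrite eqxx in H1.
Qed.

Lemma leaf_desc z : z \in Lf -> z != r -> desc z = [set z].
Proof.
rewrite inE /internal -ltnNge => Hdeg Hzr.
apply/setP=> y; rewrite !inE; apply/idP/idP => [Hzy|/eqP ->]; last exact: anc_refl.
apply/negPn/negP=> Hyz.
have [c [Hc Ec Hcy]] := anc_child Hzy Hyz.
have Hcp : c != par z.
  apply/eqP=> E; have := d_par Hc; have := d_par Hzr; rewrite -E Ec; lia.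
have : [set c; par z] \subset [set y | e z y].
  apply/subsetP=> w; rewrite !inE => /orP [] /eqP ->; last exact: par_e.
  by rewrite -Ec; have [] := parP Hc.
move/subset_leq_card; rewrite cards2 Hcp => H.
by move: Hdeg; rewrite /deg; lia.
Qed.

Lemma desc_leaf x : exists z, (z \in desc x) && (z \in Lf).
Proof.
have Hx : x \in desc x by rewrite inE anc_refl.
case: (arg_maxnP d Hx) => z Hz Hmax; exists z; apply/andP; split => //.
apply/negPn/negP; rewrite inE negbK /internal => Hdeg.
have : 0 < #|Ch z| by have := deg_le z; lia.
case/card_gt0P=> y Hy.
have Hyd : y \in desc x. rewrite inE; apply: anc_trans (ch_anc Hy); move: Hz => H; move: (H : z \in desc x); by rewrite inE.
by have := Hmax _ Hyd; rewrite /= (ch_d Hy); lia.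
Qed.

Lemma top_exists S : S \in subtrees e -> exists x, (x \in S) && (S \subset desc x).
Proof.
rewrite inE => /andP [HS0 HS].
case/set0Pn: HS0 => z0 Hz0.
case: (arg_minnP d Hz0) => t Ht Hmin; exists t; apply/andP; split => //.
have : forall k y, d y <= k -> y \in S -> anc t y.
  elim=> [|k IH] y Hk Hy; case: (boolP (anc y t)) => Hyt.
  - by rewrite (anc_deq Hyt _) ?anc_refl //; apply/eqP; rewrite eqn_leq (anc_d Hyt) (Hmin _ Hy).
  - have Ey : y = r by apply: d0; lia.
    by rewrite Ey anc_r in Hyt.
  - by rewrite (anc_deq Hyt _) ?anc_refl //; apply/eqP; rewrite eqn_leq (anc_d Hyt) (Hmin _ Hy).
  - case/andP: (keyA HS Hy Ht Hyt) => Hr Hp.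
    apply: anc_trans (IH _ _ Hp) (anc_par y); have := d_par Hr; lia.
move=> H; apply/subsetP=> y Hy; rewrite inE; exact: H _ _ (leqnn _) Hy.
Qed.

Lemma card_sum (T : finType) (A : {set T}) : #|A| = \sum_i (i \in A : nat).
Proof. by rewrite -sum1_card big_mkcond; apply: eq_bigr => i _; case: (i \in A). Qed.

Lemma top_unique (S : {set V}) x y : x \in S -> S \subset desc x ->
  y \in S -> S \subset desc y -> x = y.
Proof.
move=> Hx Hsx Hy Hsy; apply: anc_antisym.
  by move/subsetP: Hsx => /(_ y Hy); rewrite inE.
by move/subsetP: Hsy => /(_ x Hx); rewrite inE.
Qed.

Lemma card_subtrees : #|subtrees e| = \sum_x #|Tset x|.
Proof.
rewrite card_sum (eq_bigr (fun x => \sum_S (S \in Tset x : nat))); last first.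
  by move=> x _; rewrite card_sum.
rewrite exchange_big; apply: eq_bigr => S _.
case: (boolP (S \in subtrees e)) => HS; last first.
  by rewrite big1 // => x _; rewrite inE (negbTE HS).
have [t /andP [Ht Hst]] := top_exists HS.
rewrite (bigD1 t) //= inE HS Ht Hst big1 // => x Hxt.
rewrite inE HS /=; case: (boolP (_ && _)) => // /andP [Hx Hsx].
by rewrite (top_unique Hx Hsx Ht Hst) eqxx in Hxt.
Qed.

Lemma Tset_r : Tset r = [set S in subtrees e | r \in S].
Proof.
apply/setP=> S; rewrite !inE desc_r subsetT andbT //.
Qed.

Lemma T_closed x S z : S \in Tset x -> z \in S -> z != x ->
  (z != r) && (par z \in S).
Proof.
rewrite !inE => /andP [/andP [_ HS] /andP [Hx Hsx]] Hz Hzx.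
apply: (keyA HS Hz Hx); apply/negP=> Hzx'.
have : anc x z by move/subsetP: Hsx => /(_ z Hz); rewrite inE.
by move=> H; rewrite (anc_antisym Hzx' H) eqxx in Hzx.
Qed.

Definition up (Y : {set V}) := [set z | [exists y in Y, anc z y]].

Lemma inject x : x != r -> r \notin Lf ->
  #|Tset x| * 2 ^ #|Lf :\: desc x| <= #|Tset r|.
Proof.
move=> Hxr HrL.
pose F (p : {set V} * {set V}) := p.1 :|: up (x |: p.2).
pose Dom := setX (Tset x) (powerset (Lf :\: desc x)).
have HF : forall p, p \in Dom -> F p \in Tset r.
  case=> S X; rewrite in_setX /= powersetE => /andP [HS HX].
  have HS' := HS; rewrite inE in HS'; case/and3P: HS' => HSs HxS HSx.
  rewrite inE in HSs; case/andP: HSs => _ HSc.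
  have HrF : r \in F (S, X).
    by rewrite !inE; apply/orP; right; apply/existsP; exists x; rewrite !inE eqxx anc_r.
  rewrite Tset_r inE HrF andbT inE; apply/andP; split.
    by apply/set0Pn; exists x; rewrite inE HxS.
  apply: (@closed_conn _ r) => //.
  move=> z; rewrite !inE => /orP [Hz|/existsP [y /andP [Hy Hzy]]] Hzr; rewrite Hzr /=.
    case: (eqVneq z x) => [Ezx|Hzx].
      by subst z; apply/orP; right; apply/existsP; exists x; rewrite !inE eqxx anc_par.
    by case/andP: (T_closed HS Hz Hzx) => _ ->.
  by apply/orP; right; apply/existsP; exists y; rewrite Hy (anc_trans (anc_par z) Hzy).
have Hinj : {in Dom &, injective F}.
  have Hrec : forall p, p \in Dom ->
    p = (F p :&: desc x, (F p :&: Lf) :\: desc x).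
    case=> S X; rewrite in_setX /= powersetE => /andP [HS HX].
    rewrite inE in HS; case/and3P: HS => _ HxS HSx.
    congr pair; apply/setP=> z; rewrite !inE.
      apply/idP/idP => [Hz|/andP [/orP [Hz|/existsP [y /andP [Hy Hzy]]] Hxz]] //.
        by rewrite Hz /=; move/subsetP: HSx => /(_ z Hz); rewrite inE.
      move: Hy; rewrite !inE => /orP [/eqP Ey|HyX].
        by subst y; rewrite (anc_antisym Hzy Hxz).
      move/subsetP: HX => /(_ y HyX); rewrite !inE (anc_trans Hxz Hzy) //.
    apply/idP/idP => [Hz|/andP [Hzd /andP [/orP [Hz|/existsP [y /andP [Hy Hzy]]] HzL]]].
      move/subsetP: HX => /(_ z Hz); rewrite !inE => /andP [Hzd HzL].
      rewrite Hzd HzL andbT /=; apply/orP; right; apply/existsP; exists z; by rewrite !inE Hz orbT anc_refl.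
      by move/subsetP: HSx => /(_ z Hz); rewrite inE => H; rewrite H in Hzd.
    have Hzr : z != r by apply/eqP=> E; subst z; rewrite inE HzL in HrL.
    move: Hzy; have HzL' : z \in Lf by rewrite inE.
    have := leaf_desc HzL' Hzr => /setP /(_ y); rewrite !inE => -> /eqP Eyz.
    subst y; move: Hy; rewrite !inE => /orP [/eqP Ezx|//].
    by subst z; rewrite anc_refl in Hzd.
  by move=> p q Hp Hq Hpq; rewrite (Hrec p Hp) (Hrec q Hq) Hpq.
have : #|F @: Dom| <= #|Tset r|.
  by apply: subset_leq_card; apply/subsetP=> E /imsetP [p Hp ->]; apply: HF.
by rewrite card_in_imset // cardsX card_powerset.
Qed.

Definition K w u := [set y | ~~ connect (induced e [set~ w]) u y].

Lemma K0 w : w != r -> desc w \subset K w r.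
Proof.
move=> Hwr; apply/subsetP=> y; rewrite !inE => Hwy; apply/negP=> Hc.
have Hcl : forall a b, induced e [set~ w] a b -> a \in ~: desc w -> b \in ~: desc w.
  move=> a b /and3P [Ha Hb Hab]; rewrite !inE in Ha Hb *; move=> Hwa; apply/negP=> Hwb.
  case/orP: (edgeP Hab) => /andP [Hne /eqP E].
    by move/negP: Hwa; apply; rewrite E; apply: anc_step Hwb _; rewrite eq_sym.
  by move/negP: Hwa; apply; apply: anc_trans Hwb _; rewrite E; apply: anc_par.
have Hr : r \in ~: desc w by rewrite !inE; apply/negP=> /anc_to_r E; rewrite E eqxx in Hwr.
by have := conn_closed Hcl Hc Hr; rewrite !inE Hwy.
Qed.

Lemma K1 w u : ~~ anc w u -> K w u \subset desc w.
Proof.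
move=> Hwu; apply/subsetP=> y; rewrite !inE; apply: contraR => Hwy.
have H1 : connect (induced e [set~ w]) r u.
  apply: conn_chain (anc_r u) _ => z _ Hzu; rewrite !inE.
  by apply/eqP=> E; subst z; rewrite Hzu in Hwu.
have H2 : connect (induced e [set~ w]) r y.
  apply: conn_chain (anc_r y) _ => z _ Hzy; rewrite !inE.
  by apply/eqP=> E; subst z; rewrite Hzy in Hwy.
apply: connect_trans H2.
by rewrite (sym_connect_sym (@induced_sym _)).
Qed.

Lemma K2 c : c != r -> K r c \subset ~: desc c.
Proof.
move=> Hcr; apply/subsetP=> y; rewrite !inE; apply: contra => Hcy.
apply: conn_chain Hcy _ => z Hcz _; rewrite !inE.
by apply/eqP=> E; subst z; rewrite (anc_to_r Hcz) eqxx in Hcr.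
Qed.

Definition lf (A : {set V}) := #|A :&: Lf|.

Lemma lf_mono (A B : {set V}) : A \subset B -> lf A <= lf B.
Proof. by move=> H; apply: subset_leq_card; apply: setSI. Qed.

Lemma lf_disj (A B C : {set V}) : [disjoint A & B] -> A :|: B \subset C -> lf A + lf B <= lf C.
Proof.
move=> Hd Hs; apply: leq_trans (lf_mono Hs); rewrite /lf setIUl cardsU.
have -> : (A :&: Lf) :&: (B :&: Lf) = set0.
  apply/setP=> z; rewrite !inE; apply/negbTE; apply/negP=> /andP [/andP [Ha _] /andP [Hb _]].
  by move/disjoint_setI0: Hd => /setP /(_ z); rewrite !inE Ha Hb.
by rewrite cards0 subn0.
Qed.

Lemma desc_disj a b : ~~ anc a b -> ~~ anc b a -> [disjoint desc a & desc b].
Proof.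
move=> H1 H2; rewrite -setI_eq0; apply/eqP/setP=> z; rewrite !inE.
apply/negbTE/negP=> /andP [Ha Hb].
by case/orP: (anc_total Ha Hb) => H; [rewrite H in H1|rewrite H in H2].
Qed.

Definition h u := \max_(w | w != u) #|K w u :&: Lf|.

Lemma sum_ch : \sum_x #|Ch x| = #|V|.-1.
Proof.
rewrite (eq_bigr (fun x => \sum_y (y \in Ch x : nat))); last by move=> x _; rewrite card_sum.
rewrite exchange_big -(cardsC1 r) card_sum; apply: eq_bigr => y _.
rewrite !inE; case: (eqVneq y r) => [Ey|Hy] /=.
  by rewrite big1 // => x _; rewrite inE Ey eqxx.
rewrite (bigD1 (par y)) //= inE Hy eqxx big1 // => x /negbTE Hx.
by rewrite inE Hy /= eq_sym Hx.
Qed.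

Hypothesis deg3 : forall x, internal e x -> 3 <= deg e x.
Hypothesis Hri : internal e r.

Lemma rnotL : r \notin Lf.
Proof. by rewrite inE Hri. Qed.

Lemma count_int : (#|~: Lf|).*2 < #|V|.
Proof.
have H := sum_ch.
have : \sum_(x in ~: Lf) #|Ch x| <= \sum_x #|Ch x|.
  rewrite [X in _ <= X](bigID (fun x => x \in ~: Lf)) /=; exact: leq_addr.
have Hge : \sum_(x in ~: Lf) 2 <= \sum_(x in ~: Lf) #|Ch x|.
  apply: leq_sum => x Hx; rewrite !inE negbK in Hx.
  have := deg3 Hx; have := deg_le x; lia.
rewrite sum_nat_const in Hge; rewrite H.
have : 0 < #|V| by apply/card_gt0P; exists r.
lia.
Qed.


Lemma lfT : lf setT = #|Lf|.
Proof. by rewrite /lf setTI. Qed.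

Lemma lfx_le_h x : x != r -> lf (desc x) <= h r.
Proof.
move=> Hxr; apply: leq_trans (lf_mono (K0 Hxr)) _.
by apply: (@leq_bigmax_cond _ (fun w => w != r) (fun w => #|K w r :&: Lf|)).
Qed.

Lemma K_desc w : w != r -> K w r = desc w.
Proof.
move=> Hwr; apply/eqP; rewrite eqEsubset K0 // K1 //.
by apply/negP=> /anc_to_r E; rewrite E eqxx in Hwr.
Qed.

Hypothesis Hmin : forall u, internal e u -> h r <= h u.

Lemma centroid : (h r).*2 <= #|Lf|.
Proof.
rewrite leqNgt; apply/negP=> Hbig.
have HL2 : 2 <= #|Lf|.
  have := count_int; have := cardsC Lf; have : 0 < #|~: Lf|.
    by apply/card_gt0P; exists r; rewrite !inE negbK Hri.
  lia.
case: (boolP [exists w, (w != r) && (#|Lf| < (lf (desc w)).*2)]); last first.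
  rewrite negb_exists => /forallP Hall.
  have : h r <= #|Lf| %/ 2.
    apply/bigmax_leqP => w Hw; rewrite (K_desc Hw).
    have := Hall w; rewrite Hw /= -leqNgt /lf => H; lia.
  lia.
case/existsP=> w /andP [Hwr Hw].
have [c [Hcr Hpc Hcw]] := anc_child (anc_r w) Hwr.
have Hlc : #|Lf| < (lf (desc c)).*2.
  apply: leq_trans Hw _; rewrite leq_double; apply: lf_mono.
  by apply/subsetP=> z; rewrite !inE => Hz; apply: anc_trans Hcw Hz.
have Hci : internal e c.
  apply/negPn/negP=> Hc.
  have Hc' : c \in Lf by rewrite inE.
  move: Hlc; rewrite (leaf_desc Hc' Hcr) /lf.
  have := subset_leq_card (subsetIl [set c] Lf); rewrite cards1; lia.
have Hhc : h c < lf (desc c).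
  have Hpos : 0 < lf (desc c) by lia.
  suff : h c <= (lf (desc c)).-1 by lia.
  apply/bigmax_leqP => w' Hw'c.
  case: (eqVneq w' r) => [Ew'|Hw'r].
    subst w'.
    have Hd : [disjoint desc c & ~: desc c].
      by rewrite -setI_eq0 setICr.
    have := lf_disj Hd (subsetT _); rewrite lfT.
    have := lf_mono (K2 Hcr); rewrite /lf in Hlc *; move: Hlc; clear; lia.
  have Hw'c' : ~~ anc w' c.
    apply/negP=> H; have := anc_step H Hw'c; rewrite Hpc => /anc_to_r E.
    by rewrite E eqxx in Hw'r.
  have HK := lf_mono (K1 Hw'c'); rewrite /lf in HK *.
  case: (boolP (anc c w')) => Hcw'.
  -
    have [c1 [Hc1r Hpc1 Hc1w]] := anc_child Hcw' Hw'c.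
    have Hch : 2 <= #|Ch c| by have := deg3 Hci; have := deg_le c; clear; lia.
    have Hc1 : c1 \in Ch c by rewrite inE Hc1r Hpc1 eqxx.
    have : 0 < #|Ch c :\ c1| by rewrite (cardsD1 c1) Hc1 in Hch; move: Hch; clear; lia.
    case/card_gt0P=> c2; rewrite !inE => /andP [Hc21 /andP [Hc2r /eqP Hpc2]].
    have Hc2 : c2 \in Ch c by rewrite inE Hc2r Hpc2 eqxx.
    have Hdeq : d c1 = d c2 by rewrite (ch_d Hc1) (ch_d Hc2).
    have Hd : [disjoint desc w' & desc c2].
      apply: desc_disj; apply/negP=> H.
        have := anc_trans Hc1w H => H2; rewrite (anc_deq H2 Hdeq) eqxx in Hc21 => //.
      case/orP: (anc_total H Hc1w) => H2.
        by rewrite (anc_deq H2 (esym Hdeq)) eqxx in Hc21.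
      by rewrite (anc_deq H2 Hdeq) eqxx in Hc21.
    have Hsub : desc w' :|: desc c2 \subset desc c.
      apply/subsetP=> z; rewrite !inE => /orP [] Hz.
        exact: anc_trans Hcw' Hz.
      exact: anc_trans (ch_anc Hc2) Hz.
    have := lf_disj Hd Hsub.
    have [z /andP [Hz1 Hz2]] := desc_leaf c2.
    have : 0 < lf (desc c2) by apply/card_gt0P; exists z; rewrite inE Hz1 Hz2.
    rewrite /lf; move: HK Hlc; rewrite /lf; clear; lia.
  - have Hd : [disjoint desc w' & desc c] by apply: desc_disj.
    have := lf_disj Hd (subsetT _); rewrite lfT /lf; move: HK Hlc; rewrite /lf; clear; lia.
have := Hmin Hci; have := lfx_le_h Hcr; move: Hhc; clear; lia.
Qed.

Lemma Nv_pos : 0 < #|Tset r|.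
Proof.
apply/card_gt0P; exists setT; rewrite Tset_r !inE andbT.
apply/andP; split; first by apply/set0Pn; exists r.
by apply: (@closed_conn _ r) => // y _ Hy; rewrite Hy in_setT.
Qed.

Lemma bound_x x : x != r -> #|Tset x| * 2 ^ #|Lf| <= #|Tset r| * 2 ^ lf (desc x).
Proof.
move=> Hx; have H := inject Hx rnotL.
rewrite -(cardsID (desc x) Lf) expnD /lf setIC mulnCA mulnA.
by rewrite -mulnA [X in _ <= X]mulnC leq_mul2l H orbT.
Qed.

Lemma sum_bound : \sum_(x | x != r) 2 ^ lf (desc x) <=
  2 * #|Lf| + (#|~: Lf| - 1) * 2 ^ (maxn (h r) 3).
Proof.
rewrite (bigID (fun x => x \in Lf)) /=; apply: leq_add.
  rewrite (eq_bigl (fun x => x \in Lf)); last first.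
    move=> x /=; case: (boolP (x \in Lf)) => Hx; rewrite ?andbF ?andbT //.
    by apply/eqP=> E; subst x; have := rnotL; rewrite Hx.
  apply: leq_trans (_ : \sum_(x in Lf) 2 <= _); last by rewrite sum_nat_const mulnC.
  apply: leq_sum => x Hx.
  have Hxr : x != r by apply/eqP=> E; subst x; have := rnotL; rewrite Hx.
  rewrite /lf (leaf_desc Hx Hxr) (_ : 2 = 2 ^ 1) // leq_pexp2l //.
  by apply: leq_trans (subset_leq_card (subsetIl _ _)) _; rewrite cards1.
rewrite (eq_bigl (fun x => x \in ~: Lf :\ r)); last by move=> x; rewrite !inE andbC.
apply: leq_trans (_ : \sum_(x in ~: Lf :\ r) 2 ^ (maxn (h r) 3) <= _).
  apply: leq_sum => x; rewrite !inE => /andP [Hxr _].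
  by rewrite leq_pexp2l //; apply: leq_trans (lfx_le_h Hxr) (leq_maxl _ _).
rewrite sum_nat_const leq_mul2r; apply/orP; right.
have Hr : r \in ~: Lf by rewrite inE rnotL.
by rewrite (cardsD1 r (~: Lf)) Hr add1n subn1.
Qed.

Lemma main_count : 30 <= #|V| ->
  (#|V| - 3) * (#|subtrees e| - #|Tset r|) < 2 * #|Tset r|.
Proof.
move=> H30.
set L := #|Lf|; set I := #|~: Lf|; set M := maxn (h r) 3; set Nv := #|Tset r|.
have HnLI : #|V| = L + I by rewrite /L /I cardsC.
have HcI := count_int; rewrite -/I in HcI.
have Hcen := centroid; rewrite -/L in Hcen.
have HL : 16 <= L by lia.
have HIL : I < L by lia.
have HM3 : 3 <= M by apply: leq_maxr.
have HM2 : M.*2 <= L by rewrite /M; case: (leqP (h r) 3) => H; lia.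
have HN' : #|subtrees e| - Nv = \sum_(x | x != r) #|Tset x|.
  by rewrite card_subtrees (bigD1 r) //= addKn.
rewrite HN'.
have Hsum : (\sum_(x | x != r) #|Tset x|) * 2 ^ L <= Nv * (2 * L + (I - 1) * 2 ^ M).
  rewrite big_distrl /=; apply: leq_trans (_ : \sum_(x | x != r) Nv * 2 ^ lf (desc x) <= _).
    by apply: leq_sum => x Hx; apply: bound_x.
  by rewrite -big_distrr leq_mul2l sum_bound orbT.
have Hnum := num_ineq HL HIL HM3 HM2.
have HNv := Nv_pos; rewrite -/Nv in HNv.
rewrite -(ltn_pmul2r (expn_gt0 2 L)) -mulnA mulnCA.
have -> : #|V| - 3 = L + I - 3 by rewrite HnLI.
apply: leq_ltn_trans (_ : (L + I - 3) * (Nv * (2 * L + (I - 1) * 2 ^ M)) < _).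
  by rewrite mulnCA leq_mul2l Hsum orbT.
by rewrite mulnCA (mulnC 2 Nv) -mulnA ltn_pmul2l.
Qed.

End Rooted.

Lemma nat_part (q p b a n : nat) : 0 < p -> p <= a -> a <= n * p -> q <= b -> b <= (n-1) * q ->
  (n - 3) * q < 2 * p -> 3 <= n ->
  (a * q < b * p + 2 * ((p + q) * p)) /\ (b * p < a * q + 2 * ((p + q) * p)).
Proof.
move=> Hp H1 H2 H3 H4 H5 Hn.
have K1 : n * q < q + 2 * (p + q) by nia.
have K2 : (n - 1) * q < q + 2 * (p + q) by nia.
have K1' := K1; rewrite -(ltn_pmul2r Hp) in K1'.
have K2' := K2; rewrite -(ltn_pmul2r Hp) in K2'.
split.
- apply: leq_ltn_trans (_ : n * p * q < _); first by rewrite leq_mul2r H2 orbT.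
  apply: leq_trans (_ : q * p + 2 * ((p + q) * p) <= _); last by rewrite leq_add2r leq_mul2r H3 orbT.
  have -> : n * p * q = n * q * p by rewrite mulnAC.
  by move: K1'; rewrite mulnDl mulnAC -(mulnA 2).
- apply: leq_ltn_trans (_ : (n - 1) * q * p < _); first by rewrite leq_mul2r H4 orbT.
  apply: leq_trans (_ : p * q + 2 * ((p + q) * p) <= _); last by rewrite leq_add2r leq_mul2r H1 orbT.
  move: K2'; rewrite mulnDl (mulnC q p) -(mulnA 2). by [].
Qed.


Lemma card_split (V : finType) (A : {set {set V}}) (v : V) :
  #|A| = #|[set S in A | v \in S]| + #|[set S in A | v \notin S]|.
Proof.
rewrite -(cardsID [set S : {set V} | v \in S] A); congr (_ + _); apply: eq_card => S; 
  by rewrite !inE andbC.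
Qed.

Lemma sum_split (V : finType) (A : {set {set V}}) (v : V) :
  \sum_(S in A) #|S| = \sum_(S in A | v \in S) #|S| + \sum_(S in A | v \notin S) #|S|.
Proof. by rewrite (bigID (fun S : {set V} => v \in S)). Qed.

Lemma card_sum1 (V : finType) (A : {set {set V}}) (P : pred {set V}) :
  #|[set S in A | P S]| = \sum_(S in A | P S) 1.
Proof. by rewrite -sum1_card; apply: eq_bigl => S; rewrite !inE. Qed.

Lemma sum_lb (V : finType) (A : {set {set V}}) (P : pred {set V}) :
  (forall S, S \in A -> P S -> 0 < #|S|) ->
  #|[set S in A | P S]| <= \sum_(S in A | P S) #|S|.
Proof. by move=> H; rewrite card_sum1; apply: leq_sum => S /andP [H1 H2]; apply: H. Qed.

Lemma sum_ub (V : finType) (A : {set {set V}}) (P : pred {set V}) m :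
  (forall S, S \in A -> P S -> #|S| <= m) ->
  \sum_(S in A | P S) #|S| <= m * #|[set S in A | P S]|.
Proof.
move=> H; rewrite card_sum1 big_distrr /= muln1.
by apply: leq_sum => S /andP [H1 H2]; apply: H.
Qed.

Local Open Scope ring_scope.

Lemma alg_part (q p b a n : nat) : (0 < p)%N -> (p <= a)%N -> (a <= n * p)%N -> (q <= b)%N -> (b <= (n-1) * q)%N ->
  ((n - 3) * q < 2 * p)%N -> (3 <= n)%N ->
  `| ((a + b)%N%:R / (p + q)%N%:R - a%:R / p%:R : rat) | < 2.
Proof.
move=> Hp H1 H2 H3 H4 H5 Hn.
have [N1 N2] := nat_part Hp H1 H2 H3 H4 H5 Hn.
have Hp' : (0 : rat) < p%:R by rewrite ltr0n.
have Hpq' : (0 : rat) < (p + q)%N%:R by rewrite ltr0n; lia.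
have Hd : (0 : rat) < ((p + q) * p)%N%:R by rewrite ltr0n muln_gt0; apply/andP; split => //; lia.
have E : ((a + b)%N%:R / (p + q)%N%:R - a%:R / p%:R : rat) =
  ((b * p)%N%:R - (a * q)%N%:R) / ((p + q) * p)%N%:R.
  rewrite !natrM !natrD; field.
  by apply/andP; split; rewrite -?natrD lt0r_neq0.
rewrite E ltr_norml ltr_pdivrMr // ltr_pdivlMr //; apply/andP; split.
  move: N1; rewrite -(ltr_nat rat) !natrD !natrM => N1.
  rewrite !natrM !natrD in Hd *; lra.
move: N2; rewrite -(ltr_nat rat) !natrD !natrM => N2.
rewrite !natrM !natrD in Hd *; lra.
Qed.


Theorem mainTheorem11 (V : finType) (e : rel V) :
  in_T3 e -> (30 <= #|V|)%N ->
  exists v : V, internal e v && (`|mu e - lambda e v| < 2).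
Proof.
case=> [[[Hsym Hirr] Hpos Hconn Hcard] [u Hu] Hdeg3] H30.
have econn : forall x y, connect e x y.
  move=> x y; move: Hconn; move/forallP/(_ x)/implyP/(_ (in_setT x))/forallP/(_ y)/implyP/(_ (in_setT y)).
  by rewrite (@eq_connect _ _ e) // => a b; rewrite /induced !in_setT.
pose v := [arg min_(w < u | internal e w) h e w].
have [Hv Hmin] : internal e v /\ forall w, internal e w -> (h e v <= h e w)%N.
  by rewrite /v; case: arg_minnP.
exists v; rewrite Hv /=.
have Hmc := main_count Hsym Hirr econn Hcard Hdeg3 Hv Hmin H30.
have HNv := Nv_pos Hsym econn Hcard v.
rewrite (Tset_r econn Hcard) in Hmc HNv.
set A := subtrees e in Hmc HNv *.
rewrite (card_split A v) addKn in Hmc.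
rewrite /mu /lambda -/A.
have Hsum : (\sum_(S in A) #|S|)%R = (\sum_(S in A | v \in S) #|S| + \sum_(S in A | v \notin S) #|S|)%N.
  have E : (\sum_(S in A) #|S|)%R = (\sum_(S in A) #|S|)%N by [].
  by rewrite E (sum_split A v).
rewrite Hsum (card_split A v).
set Nv := #|[set S in A | v \in S]|; set N' := #|[set S in A | v \notin S]|.
set Rv := (\sum_(S in A | v \in S) #|S|)%N; set R' := (\sum_(S in A | v \notin S) #|S|)%N.
apply: (@alg_part N' Nv R' Rv #|V|) => //.
- apply: (sum_lb (P := fun S => v \in S)) => S _ HvS.
  by apply/card_gt0P; exists v.
- apply: (sum_ub (P := fun S => v \in S)) => S _ _.
  exact: max_card.
- apply: (sum_lb (P := fun S => v \notin S)) => S; rewrite inE => /andP [HS _] _.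
  by rewrite card_gt0.
- apply: (sum_ub (P := fun S => v \notin S)) => S _ HvS.
  rewrite subn1 -(cardsC1 v); apply: subset_leq_card; apply/subsetP=> z Hz.
  by rewrite !inE; apply/eqP=> E; subst z; rewrite Hz in HvS.
- exact: (leq_trans _ H30).
Qed.
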